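(* Consider the $r$-cGA with parameter $K$ on $r\text{-OneMax}$ with frequencies $p^{(t)}_{i,j}$. For $t\geq 0$ let $\varphi_t:=\sum_{i=1}^n(1-p^{(t)}_{i,r-1})=n-\sum_{i=1}^n p^{(t)}_{i,r-1}$. If there is some $s>0$ such that $p^{(t)}_{i,r-1}\geq s$ for all $i\in\{1,\dots,n\}$, and furthermore $\varphi_t\geq 1/2$, then \[\mathbb{E}(\varphi_t-\varphi_{t+1}\mid\varphi_t)\geq\frac{2s\sqrt{\varphi_t}}{15K}.\]
   Context: Let $n\geq 1$, $r\geq 2$ be integers and $K>0$. The $r$-cGA maximizing $f$ maintains frequencies $p^{(t)}_{i,j}$ ($i\in\{1,\dots,n\}$, $j\in\{0,\dots,r-1\}$), initialized to $1/r$. In iteration $t$ it samples $x,y\in\{0,\dots,r-1\}^n$ independently, each position $i$ independently with $\Pr[x_i=j]=p^{(t)}_{i,j}$; if $f(x)<f(y)$ it swaps $x$ and $y$; then it sets $p^{(t+1)}_{i,j}=p^{(t)}_{i,j}+\frac1K(\mathbf{1}[x_i=j]-\mathbf{1}[y_i=j])$ for all $i,j$, with no margins. It is assumed that $1/r$ is an integer multiple of $1/K$. Here $f=r\text{-OneMax}$, $r\text{-OneMax}(x)=\sum_{i=1}^n\mathbf{1}[x_i=r-1]$. *)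

(* Defs.v *)
From HB Require Import structures.
From mathcomp Require Import all_boot all_order all_algebra.
From mathcomp Require Import reals.
Set Implicit Arguments. Unset Strict Implicit. Unset Printing Implicit Defensive.
Import Order.TTheory GRing.Theory Num.Theory.
Local Open Scope ring_scope.

(* The alphabet {0,...,r-1}.  We write it as 'I_(r.-1).+1, which equals 'I_r
   whenever r >= 1 (the theorem assumes r >= 2), so that the top value r-1
   is available as ord_max. *)
Definition Sym (r : nat) := 'I_(r.-1).+1.
Definition topS (r : nat) : Sym r := ord_max.

Definition ind (n r : nat) := {ffun 'I_n -> Sym r}.

Definition freq (R : realType) (n r : nat) := 'M[R]_(n, (r.-1).+1).

Definition rOneMax (n r : nat) (x : ind n r) : nat :=
  \sum_(i < n) (x i == topS r : nat).

Definition probx (R : realType) (n r : nat) (p : freq R n r) (x : ind n r) : R :=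
  \prod_(i < n) p i (x i).

(* Frequency update with winner x and loser y (no margins). *)
Definition cga_update (R : realType) (n r : nat) (K : R) (p : freq R n r)
    (x y : ind n r) : freq R n r :=
  \matrix_(i, j) (p i j + K^-1 * ((x i == j)%:R - (y i == j)%:R)).

Definition cga_step (R : realType) (n r : nat) (K : R) (p : freq R n r)
    (x y : ind n r) : freq R n r :=
  if (rOneMax x < rOneMax y)%N then cga_update K p y x else cga_update K p x y.

Definition init_freq (R : realType) (n r : nat) : freq R n r :=
  const_mx (r%:R^-1).

(* States that p^{(t)} takes with positive probability at time t. *)
Inductive reachable (R : realType) (n r : nat) (K : R) : nat -> freq R n r -> Prop :=
| reach0 : reachable K 0 (init_freq R n r)
| reachS t p (x y : ind n r) :
    reachable K t p -> 0 < probx p x * probx p y ->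
    reachable K t.+1 (cga_step K p x y).

Definition phi (R : realType) (n r : nat) (p : freq R n r) : R :=
  \sum_(i < n) (1 - p i (topS r)).

Definition exp_next (R : realType) (n r : nat) (K : R) (F : freq R n r -> R)
    (p : freq R n r) : R :=
  \sum_(x : ind n r) \sum_(y : ind n r) probx p x * probx p y * F (cga_step K p x y).

(* Main.v *)
Require Import Defs.
From HB Require Import structures.
From mathcomp Require Import all_boot all_order all_algebra.
From mathcomp Require Import reals.
From mathcomp Require Import ring lra.
Import Order.TTheory GRing.Theory Num.Theory.
Local Open Scope ring_scope.

Section Aux.
Variables (R : realType) (n r : nat) (p : freq R n r).

Definition upd (x : ind n r) (k : 'I_n) (a : Sym r) : ind n r :=
  [ffun i => if i == k then a else x i].

Lemma upd_k x k a : upd x k a k = a.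
Proof. by rewrite ffunE eqxx. Qed.

Lemma upd_ne x k a i : i != k -> upd x k a i = x i.
Proof. by move=> h; rewrite ffunE (negbTE h). Qed.

Lemma upd_upd x k a : upd (upd x k a) k (x k) = x.
Proof. by apply/ffunP => i; rewrite !ffunE; case: eqP => // ->. Qed.

Lemma swap_sum k (Psi : ind n r -> Sym r -> R) :
  \sum_(x : ind n r) \sum_a Psi (upd x k a) (x k) = \sum_(x : ind n r) \sum_a Psi x a.
Proof.
rewrite !pair_bigA /=.
have inj : injective (fun u : ind n r * Sym r => (upd u.1 k u.2, u.1 k)).
  apply: (can_inj (g := fun u : ind n r * Sym r => (upd u.1 k u.2, u.1 k))).
  by move=> [x a] /=; rewrite upd_upd upd_k.
by rewrite [RHS](reindex_inj inj).
Qed.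

Definition Qx (k : 'I_n) (x : ind n r) := \prod_(i | i != k) p i (x i).

Lemma probxE k x : probx p x = p k (x k) * Qx k x.
Proof. by rewrite /probx (bigD1 k). Qed.

Lemma Qx_upd k x a : Qx k (upd x k a) = Qx k x.
Proof. by apply: eq_bigr => i hi; rewrite upd_ne. Qed.

Lemma indep1 k (F : ind n r -> R) (c : Sym r -> R) :
  (forall x a, F (upd x k a) = F x) -> \sum_j p k j = 1 ->
  \sum_(x : ind n r) probx p x * F x * c (x k) = (\sum_(x : ind n r) probx p x * F x) * (\sum_a p k a * c a).
Proof.
move=> hF h1.
transitivity (\sum_(x : ind n r) \sum_a p k a * (p k (x k) * Qx k x * F x * c (x k))).
  by apply: eq_bigr => x _; rewrite -mulr_suml h1 mul1r (probxE k).
rewrite -(swap_sum k (fun x' b => p k b * (p k (x' k) * Qx k x' * F x' * c (x' k)))).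
rewrite mulr_suml; apply: eq_bigr => x _; rewrite mulr_sumr; apply: eq_bigr => a _ /=.
by rewrite upd_k Qx_upd hF (probxE k); ring.
Qed.

Definition Ex (G : ind n r -> ind n r -> R) :=
  \sum_(x : ind n r) \sum_(y : ind n r) probx p x * probx p y * G x y.

Lemma indep2 k G (h : Sym r -> Sym r -> R) :
  (forall x y a, G (upd x k a) y = G x y) ->
  (forall x y a, G x (upd y k a) = G x y) -> \sum_j p k j = 1 ->
  Ex (fun x y => G x y * h (x k) (y k)) =
  Ex G * \sum_a \sum_b p k a * p k b * h a b.
Proof.
move=> hG1 hG2 h1; rewrite /Ex.
transitivity (\sum_(x : ind n r) probx p x * (\sum_(y : ind n r) probx p y * G x y) * (\sum_b p k b * h (x k) b)).
  apply: eq_bigr => x _; rewrite -mulrA -(indep1 k (G x) (h (x k))) //.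
    by rewrite mulr_sumr; apply: eq_bigr => y _; ring.
have := (indep1 k (fun x => \sum_(y : ind n r) probx p y * G x y) (fun a => \sum_b p k b * h a b)).
move=> ->; last first.
- by [].
- by move=> x a; apply: eq_bigr => y _; rewrite hG1.
congr (_ * _).
  by apply: eq_bigr => x _; rewrite mulr_sumr; apply: eq_bigr => y _; rewrite mulrA.
by apply: eq_bigr => a _; rewrite mulr_sumr; apply: eq_bigr => b _; rewrite mulrA.
Qed.

Lemma Ex_ext F G : (forall x y, F x y = G x y) -> Ex F = Ex G.
Proof. by move=> h; apply: eq_bigr => x _; apply: eq_bigr => y _; rewrite h. Qed.

Lemma Ex_lin a b F G : Ex (fun x y => a * F x y + b * G x y) = a * Ex F + b * Ex G.
Proof.
rewrite /Ex !mulr_sumr -big_split /=; apply: eq_bigr => x _.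
rewrite ?mulr_sumr -big_split /=; apply: eq_bigr => y _; ring.
Qed.

Lemma Ex_scal a F : Ex (fun x y => a * F x y) = a * Ex F.
Proof.
rewrite /Ex !mulr_sumr; apply: eq_bigr => x _.
rewrite ?mulr_sumr; apply: eq_bigr => y _; ring.
Qed.

Lemma Ex_mono F G : (forall x, 0 <= probx p x) -> (forall x y, F x y <= G x y) ->
  Ex F <= Ex G.
Proof.
move=> h0 h; apply: ler_sum => x _; apply: ler_sum => y _.
by apply: ler_wpM2l; [apply: mulr_ge0|].
Qed.

Lemma sum_bool k (G : bool -> R) : \sum_j p k j = 1 ->
  \sum_a p k a * G (a == topS r) = p k (topS r) * G true + (1 - p k (topS r)) * G false.
Proof.
move=> h1.
have hs : \sum_(a | a != topS r) p k a = 1 - p k (topS r).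
  by move: h1; rewrite (bigD1 (topS r)) //= => h; lra.
rewrite (bigD1 (topS r)) //= eqxx -hs mulr_suml; congr (_ + _).
by apply: eq_bigr => a /negbTE ->.
Qed.

Lemma sum2_bool k (H : bool -> bool -> R) : \sum_j p k j = 1 ->
  \sum_a \sum_b p k a * p k b * H (a == topS r) (b == topS r) =
  p k (topS r) * (p k (topS r) * H true true + (1 - p k (topS r)) * H true false) +
  (1 - p k (topS r)) * (p k (topS r) * H false true + (1 - p k (topS r)) * H false false).
Proof.
move=> h1.
transitivity (\sum_a p k a * (\sum_b p k b * H (a == topS r) (b == topS r))).
  by apply: eq_bigr => a _; rewrite mulr_sumr; apply: eq_bigr => b _; rewrite mulrA.
under eq_bigr => a _ do rewrite (sum_bool k (H (a == topS r)) h1).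
by rewrite (sum_bool k (fun c => p k (topS r) * H c true + (1 - p k (topS r)) * H c false) h1).
Qed.


Definition dd (a b : Sym r) : R := (a == topS r)%:R - (b == topS r)%:R.
Definition Zk (k : nat) (x y : ind n r) := \sum_(i < n | (i < k)%N) dd (x i) (y i).
Definition vv (i : 'I_n) := 2 * p i (topS r) * (1 - p i (topS r)).
Definition Sk (k : nat) := \sum_(i < n | (i < k)%N) vv i.

Lemma e_dd0 k : \sum_j p k j = 1 -> \sum_a \sum_b p k a * p k b * dd a b ^+ 0 = 1.
Proof. by move=> h1; rewrite /dd (sum2_bool k (fun c1 c2 => (c1%:R - c2%:R) ^+ 0)) //=; ring. Qed.
Lemma e_dd1 k : \sum_j p k j = 1 -> \sum_a \sum_b p k a * p k b * dd a b ^+ 1 = 0.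
Proof. by move=> h1; rewrite /dd (sum2_bool k (fun c1 c2 => (c1%:R - c2%:R) ^+ 1)) //=; ring. Qed.
Lemma e_dd2 k : \sum_j p k j = 1 -> \sum_a \sum_b p k a * p k b * dd a b ^+ 2 = vv k.
Proof. by move=> h1; rewrite /dd /vv (sum2_bool k (fun c1 c2 => (c1%:R - c2%:R) ^+ 2)) //=; ring. Qed.
Lemma e_dd3 k : \sum_j p k j = 1 -> \sum_a \sum_b p k a * p k b * dd a b ^+ 3 = 0.
Proof. by move=> h1; rewrite /dd (sum2_bool k (fun c1 c2 => (c1%:R - c2%:R) ^+ 3)) //=; ring. Qed.
Lemma e_dd4 k : \sum_j p k j = 1 -> \sum_a \sum_b p k a * p k b * dd a b ^+ 4 = vv k.
Proof. by move=> h1; rewrite /dd /vv (sum2_bool k (fun c1 c2 => (c1%:R - c2%:R) ^+ 4)) //=; ring. Qed.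

Lemma Zk0 x y : Zk 0 x y = 0.
Proof. by rewrite /Zk big1 // => i; rewrite ltn0. Qed.

Lemma Sk0 : Sk 0 = 0.
Proof. by rewrite /Sk big1 // => i; rewrite ltn0. Qed.

Lemma predS k (hk : (k < n)%N) (i : 'I_n) :
  ((i < k.+1)%N && (i != Ordinal hk)) = (i < k)%N.
Proof.
rewrite ltnS; case: (ltngtP i k) => h /=.
- by apply/eqP => e; move: h; rewrite e /= ltnn.
- by [].
- by apply/negbTE; rewrite negbK; apply/eqP/val_inj.
Qed.

Lemma ZkS k (hk : (k < n)%N) x y :
  Zk k.+1 x y = Zk k x y + dd (x (Ordinal hk)) (y (Ordinal hk)).
Proof.
rewrite /Zk (bigD1 (Ordinal hk)) //= addrC; congr (_ + _).
by apply: eq_bigl => i; rewrite predS.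
Qed.

Lemma SkS k (hk : (k < n)%N) : Sk k.+1 = Sk k + vv (Ordinal hk).
Proof.
rewrite /Sk (bigD1 (Ordinal hk)) //= addrC; congr (_ + _).
by apply: eq_bigl => i; rewrite predS.
Qed.

Lemma Zk_upd1 k (hk : (k < n)%N) x y a : Zk k (upd x (Ordinal hk) a) y = Zk k x y.
Proof.
apply: eq_bigr => i hi; rewrite upd_ne //.
by apply/eqP => e; move: hi; rewrite e /= ltnn.
Qed.

Lemma Zk_upd2 k (hk : (k < n)%N) x y a : Zk k x (upd y (Ordinal hk) a) = Zk k x y.
Proof.
apply: eq_bigr => i hi; rewrite upd_ne //.
by apply/eqP => e; move: hi; rewrite e /= ltnn.
Qed.

Lemma Ex1 : (forall i, \sum_j p i j = 1) -> Ex (fun _ _ => 1) = 1.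
Proof.
move=> h1.
have hs : \sum_(x : ind n r) probx p x = 1.
  rewrite /probx -(bigA_distr_bigA (fun i j => p i j)).
  by rewrite big1 // => i _; rewrite h1.
rewrite /Ex; transitivity ((\sum_(x : ind n r) probx p x) * (\sum_(y : ind n r) probx p y)).
  rewrite mulr_suml; apply: eq_bigr => x _; rewrite mulr_sumr.
  by apply: eq_bigr => y _; rewrite mulr1.
by rewrite hs mulr1.
Qed.

Lemma Ex0 : Ex (fun _ _ => 0) = 0.
Proof. by rewrite /Ex big1 // => x _; rewrite big1 // => y _; rewrite mulr0. Qed.

Lemma moments k : (k <= n)%N -> (forall i, \sum_j p i j = 1) ->
  Ex (fun x y => Zk k x y ^+ 2) = Sk k /\
  Ex (fun x y => Zk k x y ^+ 4) <= Sk k + 3 * Sk k ^+ 2.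
Proof.
move=> + h1; elim: k => [|k IH] hk.
  rewrite Sk0 (Ex_ext (fun x y => Zk 0 x y ^+ 2) (fun _ _ => 0)); last by move=> x y; rewrite Zk0 expr0n.
  rewrite (Ex_ext (fun x y => Zk 0 x y ^+ 4) (fun _ _ => 0)); last first.
    by move=> x y; rewrite Zk0 expr0n.
  by rewrite Ex0; split => //; lra.
have [IH2 IH4] := IH (ltnW hk).
set k' := Ordinal hk.
have hI m j : Ex (fun x y => Zk k x y ^+ m * dd (x k') (y k') ^+ j) =
    Ex (fun x y => Zk k x y ^+ m) * \sum_a \sum_b p k' a * p k' b * dd a b ^+ j.
  apply: (indep2 k' (fun x y => Zk k x y ^+ m) (fun a b => dd a b ^+ j)).
  - by move=> x y a; rewrite /= Zk_upd1.
  - by move=> x y a; rewrite /= Zk_upd2.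
  - exact: h1.
have hZ0 : Ex (fun x y => Zk k x y ^+ 0) = 1.
  by rewrite -(Ex1 h1); apply: Ex_ext => x y; rewrite expr0.
rewrite (@SkS k hk); split.
  rewrite (Ex_ext (fun x y => Zk k.+1 x y ^+ 2) (fun x y => 1 * (Zk k x y ^+ 2 * dd (x k') (y k') ^+ 0) +
     1 * (2 * (Zk k x y ^+ 1 * dd (x k') (y k') ^+ 1) + 1 * (Zk k x y ^+ 0 * dd (x k') (y k') ^+ 2)))); last first.
    by move=> x y; rewrite (@ZkS k hk); ring.
  rewrite Ex_lin Ex_lin !hI hZ0 IH2 e_dd0 // e_dd1 // e_dd2 //; ring.
rewrite (Ex_ext (fun x y => Zk k.+1 x y ^+ 4) (fun x y => 1 * (Zk k x y ^+ 4 * dd (x k') (y k') ^+ 0) +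
     1 * (4 * (Zk k x y ^+ 3 * dd (x k') (y k') ^+ 1) + 1 * (6 * (Zk k x y ^+ 2 * dd (x k') (y k') ^+ 2)
     + 1 * (4 * (Zk k x y ^+ 1 * dd (x k') (y k') ^+ 3) + 1 * (Zk k x y ^+ 0 * dd (x k') (y k') ^+ 4)))))); last first.
  by move=> x y; rewrite (@ZkS k hk); ring.
rewrite !Ex_lin !hI hZ0 IH2 e_dd0 // e_dd1 // e_dd2 // e_dd3 // e_dd4 //.
have := sqr_ge0 (vv k'); nra.
Qed.

End Aux.
Arguments Zk {R n r}.
Arguments dd {R r}.
Arguments Sk {R n r}.
Arguments vv {R n r}.
Arguments Ex {R n r}.
Arguments Ex_lin {R n r}.
Arguments Ex_scal {R n r}.
Arguments Ex_ext {R n r}.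
Arguments Ex_mono {R n r}.
Arguments Ex1 {R n r}.
Arguments Ex0 {R n r}.
Arguments moments {R n r}.

Lemma sum_eq1 (R : realType) r (c : Sym r) : \sum_(j : Sym r) (c == j)%:R = 1 :> R.
Proof.
rewrite (bigD1 c) //= eqxx big1 ?addr0 // => j hj.
by rewrite eq_sym (negbTE hj).
Qed.

Lemma upd_inv (R : realType) n r (K : R) (q : freq R n r) a b : K != 0 ->
  (forall i j, exists m : nat, q i j = m%:R * K^-1) -> (forall i, \sum_j q i j = 1) ->
  probx q b != 0 ->
  (forall i j, exists m : nat, cga_update K q a b i j = m%:R * K^-1) /\
  (forall i, \sum_j cga_update K q a b i j = 1).
Proof.
move=> hK h1 h2 hb0; split => [i j|i].
- have [m hm] := h1 i j; rewrite mxE hm.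
  have hb : q i (b i) != 0.
    by apply: contra hb0 => /eqP h; rewrite /probx (bigD1 i) //= h mul0r.
  case: (eqVneq (b i) j) => [e | ne].
  + case: m hm => [|m'] hm.
      by move: hb; rewrite e hm mul0r eqxx.
    exists (m' + (a i == j))%N; rewrite natrD -addn1 natrD /=; ring.
  + exists (m + (a i == j))%N; rewrite natrD /=; ring.
- under eq_bigr do rewrite mxE.
  by rewrite big_split /= h2 -mulr_sumr sumrB !sum_eq1 subrr mulr0 addr0.
Qed.

Lemma reach_inv (R : realType) n r (K : R) t (q : freq R n r) : (2 <= r)%N -> 0 < K ->
  (exists m : nat, r%:R^-1 = m%:R * K^-1) -> reachable K t q ->
  (forall i j, exists m : nat, q i j = m%:R * K^-1) /\ (forall i, \sum_j q i j = 1).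
Proof.
move=> hr hK [m0 hm0]; elim => [|t' q' x y _ [IH1 IH2] hpos].
- split => [i j|i]; first by exists m0; rewrite mxE.
  rewrite (eq_bigr (fun _ => r%:R^-1)) => [|j _]; last by rewrite mxE.
  rewrite sumr_const card_ord prednK; last by apply: leq_trans hr.
  rewrite -[_ *+ r]mulr_natr mulVf // pnatr_eq0 -lt0n; exact: leq_trans hr.
- have hK0 : K != 0 by rewrite gt_eqF.
  have hx : probx q' x != 0 by apply: contraTneq hpos => ->; rewrite mul0r ltxx.
  have hy : probx q' y != 0 by apply: contraTneq hpos => ->; rewrite mulr0 ltxx.
  by rewrite /cga_step; case: ifP => _; apply: upd_inv.
Qed.

Lemma Zkn (R : realType) n r (x y : ind n r) :
  Zk (R:=R) n x y = (rOneMax x)%:R - (rOneMax y)%:R.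
Proof.
rewrite /Zk /rOneMax !natr_sum -sumrB.
by apply: eq_bigl => i; rewrite ltn_ord.
Qed.

Lemma phi_upd (R : realType) n r (K : R) (p : freq R n r) a b :
  phi (cga_update K p a b) = phi p - K^-1 * ((rOneMax a)%:R - (rOneMax b)%:R).
Proof.
rewrite /phi /rOneMax !natr_sum -sumrB mulr_sumr -sumrB.
by apply: eq_bigr => i _; rewrite mxE; ring.
Qed.

Lemma phi_step (R : realType) n r (K : R) (p : freq R n r) x y :
  phi p - phi (cga_step K p x y) = K^-1 * `|Zk n x y|.
Proof.
rewrite Zkn /cga_step; case: ltnP => h; rewrite phi_upd.
- rewrite ltr0_norm ?subr_lt0 ?ltr_nat // opprB; ring.
- rewrite ger0_norm ?subr_ge0 ?ler_nat //; ring.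
Qed.

Lemma pointwise (R : realType) (sg z : R) : 0 <= sg ->
  27 * sg ^+ 2 * z ^+ 2 + (-1) * z ^+ 4 <= 54 * sg ^+ 3 * `|z|.
Proof.
move=> hs.
have hz2 : z ^+ 2 = `|z| ^+ 2 by rewrite (real_normK (num_real z)).
have e4 : z ^+ 4 = (`|z| ^+ 2) ^+ 2 by rewrite (real_normK (num_real z)) -exprM.
rewrite hz2 e4.
have ht : 0 <= `|z| by [].
set t := `|z|.
have h : 0 <= t * (t + 6 * sg) * (t - 3 * sg) ^+ 2.
  apply: mulr_ge0; last by apply: sqr_ge0.
  by apply: mulr_ge0 => //; rewrite addr_ge0 // mulr_ge0.
nra.
Qed.

Theorem lemma4 (R : realType) (n r : nat) (K s : R) (t : nat) (p : freq R n r) :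
  (1 <= n)%N -> (2 <= r)%N -> 0 < K ->
  (exists m : nat, r%:R^-1 = m%:R * K^-1) ->
  reachable K t p ->
  0 < s -> (forall i : 'I_n, s <= p i (topS r)) ->
  1 / 2 <= phi p ->
  2 * s * Num.sqrt (phi p) / (15 * K) <= phi p - exp_next K (@phi R n r) p.
Proof.
move=> hn hr hK hm hreach hs hsp hphi.
have [hint hrow] := @reach_inv R n r K t p hr hK hm hreach.
have hK0 : K != 0 by rewrite gt_eqF.
have hp0 i j : 0 <= p i j.
  by have [k ->] := hint i j; rewrite mulr_ge0 ?invr_ge0 ?ler0n ?ltW.
have hP0 x : 0 <= probx p x by apply: prodr_ge0 => i _; apply: hp0.
have hq1 i : p i (topS r) <= 1.
  by rewrite -(hrow i) (bigD1 (topS r)) //= lerDl sumr_ge0.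
have hdiff : phi p - exp_next K (@phi R n r) p = K^-1 * Ex p (fun x y => `|Zk n x y|).
  rewrite -Ex_scal.
  transitivity (Ex p (fun x y => phi p * 1 + (-1) * phi (cga_step K p x y))).
    by rewrite Ex_lin (Ex1 p hrow) /exp_next /Ex; ring.
  by apply: Ex_ext => x y; rewrite -(@phi_step R n r K p x y); ring.
rewrite hdiff.
have hphi0 : 0 < phi p by lra.
set sg := Num.sqrt (phi p).
have hsg : 0 < sg by rewrite sqrtr_gt0.
have hsg2 : sg ^+ 2 = phi p by rewrite sqr_sqrtr // ltW.
have [hM2 hM4] := moments p n (leqnn n) hrow.
have hVdef : Sk p n = \sum_i vv p i by apply: eq_bigl => i; rewrite ltn_ord.
have hV1 : 2 * s * phi p <= Sk p n.
  rewrite hVdef /phi mulr_sumr; apply: ler_sum => i _; rewrite /vv.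
  by have := hsp i; have := hq1 i; nra.
have hV2 : Sk p n <= 2 * phi p.
  rewrite hVdef /phi mulr_sumr; apply: ler_sum => i _; rewrite /vv.
  by have := hq1 i; nra.
have hpt : Ex p (fun x y => 27 * sg ^+ 2 * Zk n x y ^+ 2 + (-1) * Zk n x y ^+ 4)
    <= Ex p (fun x y => 54 * sg ^+ 3 * `|Zk n x y|).
  by apply: Ex_mono => // x y; apply: pointwise; apply: ltW.
rewrite Ex_lin Ex_scal hM2 in hpt.
set A := Ex p (fun x y => `|Zk n x y|) in hpt *.
set M4 := Ex p (fun x y => Zk n x y ^+ 4) in hpt hM4.
set V := Sk p n in hM4 hpt hV1 hV2.
rewrite -hsg2 in hV1 hV2 hphi.
have hV0 : 0 <= V by nra.
have ha : 0 <= V * (8 * sg ^+ 2 - 1 - 3 * V) by apply: mulr_ge0 => //; lra.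
have hb : 0 <= sg ^+ 2 * (V - 2 * s * sg ^+ 2) by apply: mulr_ge0; [apply: sqr_ge0 | lra].
have h1 : 38 * s * sg ^+ 4 <= 54 * sg ^+ 3 * A by nra.
have h3 : 0 < sg ^+ 3 by apply: exprn_gt0.
have h2 : 38 * s * sg <= 54 * A.
  rewrite -(ler_pM2l h3); nra.
have hss : 0 <= s * sg by apply: mulr_ge0; apply: ltW.
have hA : 2 * s * sg / 15 <= A by lra.
have -> : 2 * s * sg / (15 * K) = K^-1 * (2 * s * sg / 15) by rewrite invfM; ring.
by rewrite ler_wpM2l // invr_ge0 ltW.
Qed.
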